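(* Let $A$ be a commutative ring and $\mathfrak{p}\subseteq A$ a prime ideal. If $A$ is totally $\sigma_{A\setminus\mathfrak{p}}$-artinian, then $\mathfrak{p}$ is a minimal prime ideal of $A$.
   Context: For a multiplicatively closed set $\Sigma\subseteq A$, $\sigma_\Sigma$ is the hereditary torsion theory with Gabriel filter $\mathcal{L}(\sigma_\Sigma)=\{\mathfrak{a}:\mathfrak{a}\cap\Sigma\ne\varnothing\}$. For a hereditary torsion theory $\tau$ with Gabriel filter $\mathcal{L}(\tau)$, $A$ is totally $\tau$-artinian if for every descending chain of ideals $\mathfrak{a}_1\supseteq\mathfrak{a}_2\supseteq\cdots$ there exist $m$ and $\mathfrak{h}\in\mathcal{L}(\tau)$ with $\mathfrak{a}_m\mathfrak{h}\subseteq\mathfrak{a}_s$ for all $s\ge m$. *)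

(* Defs.v *)
From mathcomp Require Import all_boot all_algebra.
Set Implicit Arguments. Unset Strict Implicit. Unset Printing Implicit Defensive.
Import GRing.Theory.
Local Open Scope ring_scope.

Section Ideals.
Variable A : comPzRingType.

Definition is_ideal (a : A -> Prop) : Prop :=
  [/\ a 0, (forall x y, a x -> a y -> a (x + y)) &
      (forall r x, a x -> a (r * x))].

Definition subI (a b : A -> Prop) : Prop := forall x, a x -> b x.

Definition ideal_mul (a b : A -> Prop) : A -> Prop :=
  fun z => exists s : seq (A * A),
    (forall p, p \in s -> a p.1 /\ b p.2) /\
    z = \sum_(p <- s) p.1 * p.2.

Definition is_prime_ideal (p : A -> Prop) : Prop :=
  [/\ is_ideal p, ~ p 1 & (forall x y, p (x * y) -> p x \/ p y)].

Definition is_minimal_prime (p : A -> Prop) : Prop :=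
  is_prime_ideal p /\
  (forall q, is_prime_ideal q -> subI q p -> subI p q).

Definition mult_closed (S : A -> Prop) : Prop :=
  S 1 /\ (forall x y, S x -> S y -> S (x * y)).

(* Gabriel filter of sigma_S: ideals meeting S. *)
Definition sigma_filter (S : A -> Prop) (a : A -> Prop) : Prop :=
  is_ideal a /\ exists s, a s /\ S s.

(* Totally tau-artinian, for tau given through its Gabriel filter L. *)
Definition totally_artinian (L : (A -> Prop) -> Prop) : Prop :=
  forall a : nat -> (A -> Prop),
    (forall n, is_ideal (a n)) ->
    (forall n, subI (a n.+1) (a n)) ->
    exists m, exists h, L h /\
      forall s, (m <= s)%N -> subI (ideal_mul (a m) h) (a s).

End Ideals.

(* Main.v *)
Require Import Defs.
From mathcomp Require Import all_boot all_algebra.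
Import GRing.Theory.
Local Open Scope ring_scope.

Lemma prime_pow (A : comPzRingType) (q : A -> Prop) (x : A) n :
  is_prime_ideal q -> q (x ^+ n) -> q x.
Proof.
move=> [_ q1 qm]; elim: n => [|n IH]; first by rewrite expr0 => /q1.
by rewrite exprS => /qm [].
Qed.

Theorem mainTheorem14 (A : comPzRingType) (p : A -> Prop) :
  is_prime_ideal p ->
  totally_artinian (sigma_filter (fun x : A => ~ p x)) ->
  is_minimal_prime p.
Proof.
move=> pp art; split => // q qp qsub x px.
pose a := fun n : nat => fun z : A => exists r, z = r * x ^+ n.
have aI : forall n, is_ideal (a n).
  move=> n; split.
  - by exists 0; rewrite mul0r.
  - by move=> y z [r ->] [r' ->]; exists (r + r'); rewrite mulrDl.
  - by move=> r y [r' ->]; exists (r * r'); rewrite mulrA.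
have aD : forall n, subI (a n.+1) (a n).
  by move=> n y [r ->]; exists (r * x); rewrite exprS mulrA.
have [m [h [[hI [t [ht tp]]] H]]] := art a aI aD.
have : a m.+1 (x ^+ m * t).
  apply: (H m.+1 (leqnSn m)); exists [:: (x ^+ m, t)]; split.
    by move=> pr; rewrite inE => /eqP ->; split => //; exists 1; rewrite mul1r.
  by rewrite big_cons big_nil addr0.
case=> r E.
have E0 : x ^+ m * (t - r * x) = 0.
  rewrite mulrBr E exprS.
  have -> : x ^+ m * (r * x) = r * (x * x ^+ m) by rewrite mulrA [x ^+ m * r]mulrC -mulrA [_ * x]mulrC.
  by rewrite subrr.
case: (qp) => [[q0 qD qM] _ qm].
have : q (x ^+ m * (t - r * x)) by rewrite E0.
case/qm => [qx|/qsub ptr]; first exact: (prime_pow _ _ _ m qp qx).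
exfalso; apply: tp.
case: pp => [[_ pD pM] _ _].
have -> : t = (t - r * x) + r * x by rewrite subrK.
by apply: pD => //; apply: pM.
Qed.
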